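(* Let $X=X_1\times\cdots\times X_r$ with $X_i$ smooth algebraic $k$-varieties, and $a(\mathbf T)=\sum_{\mathbf n\in\mathbb N^r}a_{\mathbf n}\mathbf T^{\mathbf n}\in\overline{\mathscr M}_X^{\hat\mu}[[\mathbf T]]$, $\mathbf T=(T_1,\dots,T_r)$. If $a(\mathbf T)$ is integrable, then for every ordered cell $\Delta\subset\mathbb N^r$ the series $a_\Delta(\mathbf T):=\sum_{\mathbf n\in\Delta}a_{\mathbf n}\mathbf T^{\mathbf n}$ is integrable.
   Context: $k$ is a field of characteristic zero; $\overline{\mathscr M}_X^{\hat\mu}$ is the monodromic Grothendieck ring of $X$-varieties with good $\hat\mu$-action, localized at $\mathbb L$ and at the elements $1-\mathbb L^n$ ($n\ge1$). A series is integrable if it lies in $\overline{\mathscr M}_X^{\hat\mu}[\mathbf T][(1-\mathbb L^m\mathbf T^{\mathbf n})^{-1}]_{m<0,\ \mathbf n\in\mathbb N^r\setminus\{0\}}\subset\overline{\mathscr M}_X^{\hat\mu}[[\mathbf T]]$. For integers $0=r_0<r_1<\cdots<r_s=r$, the basic ordered cell $\Delta_{(r_0,\dots,r_s)}$ is the set of $\mathbf n\in\mathbb N^r$ with $n_{r_{j-1}+1}=\cdots=n_{r_j}$ for each $j$ and $n_{r_{j-1}}<n_{r_j}$ for $2\le j\le s$. An ordered cell is the image of a basic ordered cell under a coordinate permutation $(n_1,\dots,n_r)\mapsto(n_{\rho(1)},\dots,n_{\rho(r)})$. *)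

(* Defs.v *)
From HB Require Import structures.
From mathcomp Require Import all_boot all_order all_algebra all_fingroup.
Set Implicit Arguments. Unset Strict Implicit. Unset Printing Implicit Defensive.
Import Order.TTheory GRing.Theory Num.Theory.
Local Open Scope ring_scope.

(* Exponent vectors n in N^r and formal power series in T = (T_1,..,T_r)
   with coefficients in A, represented by their coefficient functions. *)
Definition expo (r : nat) := 'I_r -> nat.
Definition fps (A : Type) (r : nat) := expo r -> A.

Definition expo_le (r : nat) (v n : expo r) : bool := [forall i, (v i <= n i)%N].

(* s * (1 - c T^v) *)
Definition mul_one_minus (A : comUnitRingType) (r : nat) (c : A) (v : expo r)
  (s : fps A r) : fps A r :=
  fun n => s n - c * (if expo_le v n then s (fun i => (n i - v i)%N) else 0).

Definition is_poly (A : comUnitRingType) (r : nat) (s : fps A r) : Prop :=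
  exists B : nat, forall n : expo r, ~~ [forall i, (n i <= B)%N] -> s n = 0.

Definition mul_factors (A : comUnitRingType) (r : nat) (L : A)
  (fs : seq (int * expo r)) (s : fps A r) : fps A r :=
  foldr (fun p acc => mul_one_minus (L ^ p.1) p.2 acc) s fs.

(* s is integrable: s lies in A[T][(1 - L^m T^v)^{-1}]_{m<0, v in N^r\{0}}
   inside A[[T]], i.e. s * (product of such factors) is a polynomial. *)
Definition integrable (A : comUnitRingType) (r : nat) (L : A) (s : fps A r) : Prop :=
  exists fs : seq (int * expo r),
    all (fun p => (p.1 < 0)%R && [exists i, p.2 i != 0%N]) fs /\
    is_poly (mul_factors L fs s).

(* 1-based coordinate n_k, k = 1..r (0 outside the range) *)
Definition coord (r : nat) (n : expo r) (k : nat) : nat :=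
  if insub k.-1 is Some i then n i else 0%N.

Definition cell_seq (r : nat) (rs : seq nat) : Prop :=
  [/\ head 1%N rs = 0%N, sorted ltn rs & last 0%N rs = r].

Definition in_basic_cell (r : nat) (rs : seq nat) (n : expo r) : Prop :=
  forall j : nat, (1 <= j < size rs)%N ->
    (forall k : nat, (nth 0 rs j.-1 < k <= nth 0 rs j)%N ->
        coord n k = coord n (nth 0 rs j)) /\
    ((2 <= j)%N -> (coord n (nth 0 rs j.-1) < coord n (nth 0 rs j))%N).

Definition ordered_cell (r : nat) (Delta : expo r -> Prop) : Prop :=
  exists (rs : seq nat) (rho : {perm 'I_r}),
    cell_seq r rs /\
    forall n : expo r,
      Delta n <-> exists m : expo r, in_basic_cell rs m /\ forall i, n i = m (rho i).

(* Main.v *)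
Require Import Defs.
From HB Require Import structures.
From mathcomp Require Import all_boot all_order all_algebra all_fingroup.
From mathcomp Require Import zify ring.
From Stdlib Require Import FunctionalExtensionality.
Set Implicit Arguments. Unset Strict Implicit. Unset Printing Implicit Defensive.
Import Order.TTheory GRing.Theory Num.Theory.
Local Open Scope ring_scope.

Section Aux.
Variables (A : comUnitRingType) (r : nat).
Implicit Types (s t : fps A r) (u v n : expo r) (c : A).

Lemma fext s t : (forall n, s n = t n) -> s = t.
Proof. exact: functional_extensionality. Qed.
Lemma eext (u v : expo r) : (forall i, u i = v i) -> u = v.
Proof. exact: functional_extensionality. Qed.

Definition vsub n v : expo r := fun i => (n i - v i)%N.
Definition vadd u v : expo r := fun i => (u i + v i)%N.

Definition shift v s : fps A r :=
  fun n => if expo_le v n then s (vsub n v) else 0.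
Definition fadd s t : fps A r := fun n => s n + t n.
Definition fopp s : fps A r := fun n => - s n.
Definition fscale c s : fps A r := fun n => c * s n.
Definition fzero : fps A r := fun _ => 0.
Definition M c v s : fps A r := fun n => s n - c * shift v s n.

Lemma M_def c v s : mul_one_minus c v s = M c v s. Proof. by []. Qed.

Lemma expo_leP v n : reflect (forall i, (v i <= n i)%N) (expo_le v n).
Proof. exact: forallP. Qed.

Lemma le_vadd u v n :
  expo_le (vadd u v) n = expo_le u n && expo_le v (vsub n u).
Proof.
apply/expo_leP/andP => [H|[/expo_leP H1 /expo_leP H2] i].
  split; apply/expo_leP => i; have := H i; rewrite /vadd /vsub; lia.
have := H1 i; have := H2 i; rewrite /vadd /vsub; lia.
Qed.

Lemma vsub_vadd n u v : vsub (vsub n u) v = vsub n (vadd u v).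
Proof. apply: eext => i; rewrite /vsub /vadd; lia. Qed.

Lemma vaddC u v : vadd u v = vadd v u.
Proof. apply: eext => i; rewrite /vadd; lia. Qed.

Lemma shift_shift u v s : shift u (shift v s) = shift (vadd u v) s.
Proof.
apply: fext => n; rewrite /shift le_vadd.
case: (expo_le u n) => //=; case: (expo_le v _) => //.
by rewrite vsub_vadd.
Qed.

Lemma shiftC u v s : shift u (shift v s) = shift v (shift u s).
Proof. by rewrite !shift_shift vaddC. Qed.

Lemma shift_add v s t : shift v (fadd s t) = fadd (shift v s) (shift v t).
Proof. by apply: fext => n; rewrite /shift /fadd; case: ifP; rewrite ?addr0. Qed.
Lemma shift_scale v c s : shift v (fscale c s) = fscale c (shift v s).
Proof. by apply: fext => n; rewrite /shift /fscale; case: ifP; rewrite ?mulr0. Qed.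
Lemma shift_opp v s : shift v (fopp s) = fopp (shift v s).
Proof. by apply: fext => n; rewrite /shift /fopp; case: ifP; rewrite ?oppr0. Qed.

Lemma M_add c v s t : M c v (fadd s t) = fadd (M c v s) (M c v t).
Proof. apply: fext => n; rewrite /M shift_add /fadd; ring. Qed.
Lemma M_scale c d v s : M c v (fscale d s) = fscale d (M c v s).
Proof. apply: fext => n; rewrite /M shift_scale /fscale; ring. Qed.
Lemma M_opp c v s : M c v (fopp s) = fopp (M c v s).
Proof. apply: fext => n; rewrite /M shift_opp /fopp; ring. Qed.
Lemma M_shift c u v s : M c v (shift u s) = shift u (M c v s).
Proof.
apply: fext => n; rewrite /M shiftC /shift.
case: (expo_le u n); ring.
Qed.

Lemma M_comm a b v w s : M a v (M b w s) = M b w (M a v s).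
Proof.
apply: fext => n.
rewrite [LHS]/M [RHS]/M -!M_shift /M shiftC; ring.
Qed.


Variable L : A.
Implicit Types fs gs : seq (int * expo r).

Definition adm (p : int * expo r) : bool := (p.1 < 0) && [exists i, p.2 i != 0%N].

Lemma mf_cons p fs s :
  mul_factors L (p :: fs) s = M (L ^ p.1) p.2 (mul_factors L fs s).
Proof. by []. Qed.

Lemma mf_M fs c v s : mul_factors L fs (M c v s) = M c v (mul_factors L fs s).
Proof. by elim: fs => [|p fs IH] //=; rewrite !M_def IH M_comm. Qed.
Lemma mf_add fs s t : mul_factors L fs (fadd s t) = fadd (mul_factors L fs s) (mul_factors L fs t).
Proof. by elim: fs => [|p fs IH] //=; rewrite !M_def IH M_add. Qed.
Lemma mf_scale fs d s : mul_factors L fs (fscale d s) = fscale d (mul_factors L fs s).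
Proof. by elim: fs => [|p fs IH] //=; rewrite !M_def IH M_scale. Qed.
Lemma mf_opp fs s : mul_factors L fs (fopp s) = fopp (mul_factors L fs s).
Proof. by elim: fs => [|p fs IH] //=; rewrite !M_def IH M_opp. Qed.
Lemma mf_shift fs u s : mul_factors L fs (shift u s) = shift u (mul_factors L fs s).
Proof. by elim: fs => [|p fs IH] //=; rewrite !M_def IH M_shift. Qed.
Lemma mf_cat fs gs s : mul_factors L (fs ++ gs) s = mul_factors L fs (mul_factors L gs s).
Proof. by rewrite /mul_factors foldr_cat. Qed.
Lemma mf_comm fs gs s :
  mul_factors L fs (mul_factors L gs s) = mul_factors L gs (mul_factors L fs s).
Proof. by elim: gs => [|p gs IH] //=; rewrite !M_def mf_M IH. Qed.
Lemma mf_split fs1 x fs2 s :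
  mul_factors L (fs1 ++ x :: fs2) s = M (L ^ x.1) x.2 (mul_factors L (fs1 ++ fs2) s).
Proof. by rewrite !mf_cat mf_cons mf_M. Qed.

Lemma has_split (T : Type) (P : pred T) (l : seq T) : has P l ->
  exists l1 x l2, l = l1 ++ x :: l2 /\ P x.
Proof.
elim: l => [|y l IH] //= /orP [Hy|/IH [l1 [x [l2 [-> Hx]]]]].
  by exists [::], y, l.
by exists (y :: l1), x, l2.
Qed.

Lemma poly_zero : is_poly fzero. Proof. by exists 0%N. Qed.
Lemma poly_add s t : is_poly s -> is_poly t -> is_poly (fadd s t).
Proof.
move=> [B HB] [C HC]; exists (maxn B C) => n Hn; rewrite /fadd HB ?HC ?addr0 //.
  apply: contra Hn => /forallP H; apply/forallP => i; have := H i; lia.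
apply: contra Hn => /forallP H; apply/forallP => i; have := H i; lia.
Qed.
Lemma poly_scale d s : is_poly s -> is_poly (fscale d s).
Proof. by move=> [B HB]; exists B => n Hn; rewrite /fscale HB ?mulr0. Qed.
Lemma poly_opp s : is_poly s -> is_poly (fopp s).
Proof. by move=> [B HB]; exists B => n Hn; rewrite /fopp HB ?oppr0. Qed.
Lemma poly_shift u s : is_poly s -> is_poly (shift u s).
Proof.
move=> [B HB]; exists (B + \max_i u i)%N => n /forallPn [i Hi].
rewrite /shift; case: ifP => // _; apply: HB; apply/forallPn; exists i.
move: Hi; rewrite /vsub; have := @leq_bigmax (ordinal r) u i; move: (\max_(_ < r) u _) => m; lia.
Qed.
Lemma poly_M c v s : is_poly s -> is_poly (M c v s).
Proof.
move=> Hs; have -> : M c v s = fadd s (fopp (fscale c (shift v s))) by [].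
by apply: poly_add => //; apply/poly_opp/poly_scale/poly_shift.
Qed.
Lemma poly_mf fs s : is_poly s -> is_poly (mul_factors L fs s).
Proof. by elim: fs => [|p fs IH] //= Hs; apply: poly_M; apply: IH. Qed.

Lemma int_poly s : is_poly s -> integrable L s.
Proof. by move=> Hs; exists [::]. Qed.
Lemma int_add s t : integrable L s -> integrable L t -> integrable L (fadd s t).
Proof.
move=> [fs [Ha Hs]] [gs [Hb Ht]]; exists (fs ++ gs); split.
  by rewrite all_cat Ha Hb.
rewrite mf_cat !mf_add; apply: poly_add; last exact: poly_mf.
by rewrite mf_comm; apply: poly_mf.
Qed.
Lemma int_scale d s : integrable L s -> integrable L (fscale d s).
Proof. by move=> [fs [Ha Hs]]; exists fs; split => //; rewrite mf_scale; apply: poly_scale. Qed.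
Lemma int_opp s : integrable L s -> integrable L (fopp s).
Proof. by move=> [fs [Ha Hs]]; exists fs; split => //; rewrite mf_opp; apply: poly_opp. Qed.
Lemma int_shift u s : integrable L s -> integrable L (shift u s).
Proof. by move=> [fs [Ha Hs]]; exists fs; split => //; rewrite mf_shift; apply: poly_shift. Qed.
Lemma int_zero : integrable L fzero.
Proof. exact/int_poly/poly_zero. Qed.
Lemma int_M p s : adm p -> integrable L (M (L ^ p.1) p.2 s) -> integrable L s.
Proof.
move=> Hp [fs [Ha Hs]]; exists (p :: fs); split; first by rewrite /= -/(adm p) Hp.
by rewrite mf_cons -mf_M.
Qed.


Implicit Types (lam : 'I_r -> int) (b : int).
Definition ell lam n : int := \sum_i lam i * (n i)%:Z.
Definition neg lam : 'I_r -> int := fun i => - lam i.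
Definition vsum n : nat := \sum_i n i.

Lemma ell_sub lam n v : expo_le v n -> ell lam (vsub n v) = ell lam n - ell lam v.
Proof.
move/expo_leP => H; rewrite /ell -sumrB; apply: eq_bigr => i _.
by rewrite /vsub -subzn ?H // mulrBr.
Qed.
Lemma ell_neg lam n : ell (neg lam) n = - ell lam n.
Proof. by rewrite /ell -sumrN; apply: eq_bigr => i _; rewrite /neg mulNr. Qed.

Definition resge lam b s : fps A r := fun n => if b <= ell lam n then s n else 0.
Definition reseq lam b s : fps A r := fun n => if ell lam n == b then s n else 0.

Lemma resge_add lam b s t : resge lam b (fadd s t) = fadd (resge lam b s) (resge lam b t).
Proof. by apply: fext => n; rewrite /resge /fadd; case: ifP; rewrite ?addr0. Qed.
Lemma resge_scale lam b d s : resge lam b (fscale d s) = fscale d (resge lam b s).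
Proof. by apply: fext => n; rewrite /resge /fscale; case: ifP; rewrite ?mulr0. Qed.
Lemma resge_opp lam b s : resge lam b (fopp s) = fopp (resge lam b s).
Proof. by apply: fext => n; rewrite /resge /fopp; case: ifP; rewrite ?oppr0. Qed.
Lemma poly_resge lam b s : is_poly s -> is_poly (resge lam b s).
Proof. by move=> [B HB]; exists B => n Hn; rewrite /resge; case: ifP => // _; apply: HB. Qed.

Lemma resge_M0 lam b c v s : ell lam v = 0 ->
  resge lam b (M c v s) = M c v (resge lam b s).
Proof.
move=> Hv; apply: fext => n; rewrite /resge /M /shift.
case Hle: (expo_le v n); last by case: ifP => _; ring.
by rewrite ell_sub // Hv subr0; case: ifP => _; ring.
Qed.

Lemma reseq_ge lam b s :
  reseq lam b s = fadd (resge lam b s) (fopp (resge lam (b + 1) s)).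
Proof.
apply: fext => n; rewrite /reseq /resge /fadd /fopp.
have -> : (b + 1 <= ell lam n) = (b < ell lam n) by lia.
case: eqP => [->|H]; first by rewrite lexx ltxx oppr0 addr0.
have -> : (b < ell lam n) = (b <= ell lam n) by lia.
by case: ifP => _; rewrite ?subrr ?oppr0 ?addr0.
Qed.

Lemma reseq_step lam b c v s :
  reseq lam b s =
  fadd (reseq lam b (M c v s)) (fscale c (shift v (reseq lam (b - ell lam v) s))).
Proof.
apply: fext => n; rewrite /reseq /fadd /fscale /M /shift.
case Hle: (expo_le v n); last by case: ifP => _; ring.
rewrite ell_sub //.
have -> : (ell lam n - ell lam v == b - ell lam v) = (ell lam n == b).
  by apply/eqP/eqP => H; lia.
by case: ifP => _; ring.
Qed.

Lemma resge_neg lam b s :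
  resge lam b s = fadd s (fopp (resge (neg lam) (1 - b) s)).
Proof.
apply: fext => n; rewrite /resge /fadd /fopp ell_neg.
have -> : (1 - b <= - ell lam n) = ~~ (b <= ell lam n) by lia.
by case: ifP => _ /=; rewrite ?oppr0 ?addr0 ?subrr.
Qed.

Definition supp_ge lam (be : int) s := forall n, ell lam n < be -> s n = 0.

Lemma resge_supp lam be b s : supp_ge lam be s -> b <= be -> resge lam b s = s.
Proof.
move=> Hs Hb; apply: fext => n; rewrite /resge; case: ifP => // H.
by rewrite Hs //; lia.
Qed.
Lemma reseq_supp lam be b s : supp_ge lam be s -> b < be -> reseq lam b s = fzero.
Proof.
move=> Hs Hb; apply: fext => n; rewrite /reseq /fzero; case: eqP => // H.
by rewrite Hs //; lia.
Qed.

Lemma supp_poly lam s : is_poly s -> exists be, supp_ge lam be s.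
Proof.
move=> [B HB]; exists (- \sum_i (`|lam i| * B%:Z)) => n Hn.
apply: HB; apply/negP => /forallP Hbox.
move: Hn; apply/negP; rewrite -leNgt /ell -sumrN; apply: ler_sum => i _.
have := Hbox i; move: (n i) => k Hk; nia.
Qed.

Lemma vsum_sub n v : expo_le v n -> [exists i, v i != 0%N] ->
  (vsum (vsub n v) < vsum n)%N.
Proof.
move=> /expo_leP Hle /existsP [i Hi].
have E : vsum n = (vsum (vsub n v) + vsum v)%N.
  rewrite /vsum -big_split /=; apply: eq_bigr => j _; rewrite /vsub subnK //.
have : (v i <= vsum v)%N by rewrite /vsum (bigD1 i) //= leq_addr.
rewrite E; lia.
Qed.

Lemma supp_M lam be c v X : 0 <= ell lam v -> [exists i, v i != 0%N] ->
  supp_ge lam be (M c v X) -> supp_ge lam be X.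
Proof.
move=> Hw Hv HY n.
have [k Hk] : exists k, (vsum n < k)%N by exists (vsum n).+1.
elim: k n Hk => [|k IH] n Hk Hn //.
have := HY n Hn; rewrite /M /shift; case Hle: (expo_le v n).
  rewrite (IH (vsub n v)) ?mulr0 ?subr0 //.
    by have := vsum_sub Hle Hv; lia.
  by rewrite ell_sub //; lia.
by rewrite mulr0 subr0.
Qed.

Lemma supp_mf lam be fs X :
  all (fun p => adm p && (0 <= ell lam p.2)) fs ->
  supp_ge lam be (mul_factors L fs X) -> supp_ge lam be X.
Proof.
elim: fs => [|p fs IH] //= /andP [/andP [/andP [_ Hp] Hw] Ha] H.
by apply: IH => //; apply: supp_M H.
Qed.


Fixpoint tf (c : A) (v : expo r) (s : fps A r) (k : nat) : fps A r :=
  match k with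
  | 0%N => fzero
  | k'.+1 => fun n => s n + c * (if expo_le v n then tf c v s k' (vsub n v) else 0)
  end.
Definition Gop c v s : fps A r := fun n => tf c v s (vsum n).+1 n.

Lemma tf_stable c v s : [exists i, v i != 0%N] -> forall k k' n,
  (vsum n < k)%N -> (vsum n < k')%N -> tf c v s k n = tf c v s k' n.
Proof.
move=> Hv; elim=> [|k IH] [|k'] n //= Hk Hk'.
case Hle: (expo_le v n) => //; congr (_ + _ * _).
have := vsum_sub Hle Hv => H; apply: IH; lia.
Qed.

Lemma M_Gop c v s : [exists i, v i != 0%N] -> M c v (Gop c v s) = s.
Proof.
move=> Hv; apply: fext => n; rewrite /M /Gop /shift /=.
case Hle: (expo_le v n); last by rewrite mulr0 subr0 addr0.
rewrite (@tf_stable c v s Hv (vsum n) (vsum (vsub n v)).+1) ?addrK //.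
by have := vsum_sub Hle Hv; lia.
Qed.

Definition vscale (k : nat) v : expo r := fun i => (k * v i)%N.

Lemma M_geo0 c v X : M (c ^+ 0) (vscale 0 v) X = fzero.
Proof.
apply: fext => n; rewrite /M /shift /fzero.
have -> : expo_le (vscale 0 v) n by apply/expo_leP => i; rewrite /vscale mul0n.
have -> : vsub n (vscale 0 v) = n by apply: eext => i; rewrite /vsub /vscale mul0n subn0.
by rewrite expr0 mul1r subrr.
Qed.

Lemma M_geoS c v q X :
  M (c ^+ q.+1) (vscale q.+1 v) X =
  fadd (M (c ^+ q) (vscale q v) X) (fscale (c ^+ q) (shift (vscale q v) (M c v X))).
Proof.
 apply: fext => n; rewrite /fadd /fscale -M_shift /M shift_shift.
have -> : vadd v (vscale q v) = vscale q.+1 v.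
  by apply: eext => i; rewrite /vadd /vscale mulSn; lia.
rewrite exprSr; ring.
Qed.

Lemma poly_geo c v q X : is_poly (M c v X) -> is_poly (M (c ^+ q) (vscale q v) X).
Proof.
move=> H; elim: q => [|q IH].
  by rewrite M_geo0; apply: poly_zero.
by rewrite M_geoS; apply: poly_add => //; apply/poly_scale/poly_shift.
Qed.

Lemma M_pair (a b : A) u (w : expo r) t :
  M (a * b) (vadd u w) t = fadd (fadd (M a u t) (M b w t)) (fopp (M a u (M b w t))).
Proof.
apply: fext => n; rewrite /fadd /fopp.
rewrite [M a u (M b w t) n]/M -M_shift /M shift_shift; rewrite (vaddC w u); ring.
Qed.


Lemma resge_succ lam b s :
  resge lam (b + 1) s = fadd (resge lam b s) (fopp (reseq lam b s)).
Proof.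
apply: fext => n; rewrite /resge /reseq /fadd /fopp.
case: eqP => [E|H].
  rewrite E lexx subrr; have -> : (b + 1 <= b) = false by lia.
  by [].

have -> : (b + 1 <= ell lam n) = (b <= ell lam n) by lia.
by rewrite oppr0 addr0.
Qed.

Lemma all_and (P Q : pred (int * expo r)) l :
  all P l -> all Q l -> all (fun p => P p && Q p) l.
Proof. by elim: l => //= p l IH /andP [-> H1] /andP [-> H2] /=; apply: IH. Qed.

Lemma nonneg_case lam x fs s :
  adm x -> all adm fs -> all (fun p => 0 <= ell lam p.2) fs -> 0 < ell lam x.2 ->
  is_poly (mul_factors L (x :: fs) s) ->
  (forall b, integrable L (resge lam b (M (L ^ x.1) x.2 s))) ->
  forall b, integrable L (resge lam b s).
Proof.
move=> Hx Ha Hw Hwx Hp IH.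
have [be Hbe] := supp_poly lam Hp.
have Hs : supp_ge lam be s.
  apply: (@supp_mf lam be (x :: fs)) Hbe; rewrite /= Hx ltW //=.
  exact: all_and.
set c := L ^ x.1; set v := x.2; set w := ell lam v.
have Heq : forall k : nat, forall b, b < be + k%:Z -> integrable L (reseq lam b s).
  elim=> [|k IHk] b Hb.
    by rewrite (@reseq_supp lam be) //; [exact: int_zero | lia].
  rewrite (reseq_step lam b c v s); apply: int_add.
    by rewrite reseq_ge; apply: int_add; [exact: IH | apply/int_opp/IH].
  apply/int_scale/int_shift/IHk; rewrite /w /v; lia.
have Hge : forall k : nat, integrable L (resge lam (be + k%:Z) s).
  elim=> [|k IHk].
    rewrite addr0 (resge_supp Hs) //; exists (x :: fs); split => //=.
    by rewrite -/(adm x) Hx.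
  have -> : be + k.+1%:Z = (be + k%:Z) + 1 by lia.
  rewrite resge_succ; apply: int_add => //; apply/int_opp/(Heq k.+1); lia.
move=> b; case: (lerP b be) => Hb.
  rewrite (resge_supp Hs Hb); exists (x :: fs); split => //=.
  by rewrite -/(adm x) Hx.
have E : b = be + (`|b - be|%N)%:Z by rewrite gez0_abs; [ring | lia].
by rewrite E; apply: Hge.
Qed.


Definition mu lam fs : nat := (size fs + count (fun p => ell lam p.2 != 0) fs)%N.

Lemma mu_split lam f1 x f2 :
  mu lam (f1 ++ x :: f2) = (mu lam (f1 ++ f2) + 1 + (ell lam x.2 != 0))%N.
Proof. rewrite /mu !size_cat !count_cat /=; lia. Qed.

Lemma mu_cons lam x fs : mu lam (x :: fs) = (mu lam fs + 1 + (ell lam x.2 != 0))%N.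
Proof. exact: (mu_split lam [::] x fs). Qed.

Lemma mu_neg lam fs : mu (neg lam) fs = mu lam fs.
Proof.
rewrite /mu; congr (_ + _)%N; apply: eq_count => p.
by rewrite ell_neg oppr_eq0.
Qed.

Lemma all_split (P : pred (int * expo r)) f1 x f2 :
  all P (f1 ++ x :: f2) = P x && all P (f1 ++ f2).
Proof. rewrite !all_cat /=; by case: (P x); rewrite ?andbF ?andbT. Qed.

Lemma has_split_b (P : pred (int * expo r)) f1 x f2 :
  has P (f1 ++ x :: f2) = P x || has P (f1 ++ f2).
Proof. rewrite !has_cat /=; by case: (P x); rewrite ?orbT ?orbF. Qed.

Lemma ell_vadd lam u v : ell lam (vadd u v) = ell lam u + ell lam v.
Proof.
by rewrite /ell -big_split; apply: eq_bigr => i _; rewrite /vadd PoszD mulrDr.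
Qed.
Lemma ell_vscale lam k v : ell lam (vscale k v) = k%:Z * ell lam v.
Proof.
rewrite /ell mulr_sumr; apply: eq_bigr => i _; rewrite /vscale PoszM; ring.
Qed.


Lemma main (hL : L \is a GRing.unit) N : forall lam fs s b,
  (mu lam fs <= N)%N -> all adm fs -> is_poly (mul_factors L fs s) ->
  integrable L (resge lam b s).
Proof.
elim: N => [|N IHN] lam fs s b Hmu Ha Hp.
  by case: fs Hmu Ha Hp => [|p fs] //= _ _ Hp; apply/int_poly/poly_resge.
case Hz: (has (fun p => ell lam p.2 == 0) fs).
  have [f1 [x [f2 [E Hx]]]] := has_split Hz; subst fs.
  move: Ha; rewrite all_split => /andP [Hxa Ha].
  apply: (@int_M x) => //.
  rewrite -(resge_M0 _ _ _ (eqP Hx)).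
  apply: (IHN lam (f1 ++ f2)) => //.
    by move: Hmu; rewrite mu_split (eqP Hx) eqxx; lia.
  by rewrite mf_M -mf_split.
case Hpn: (has (fun p => 0 < ell lam p.2) fs && has (fun p => ell lam p.2 < 0) fs).
  move/andP: Hpn => [Hpos Hneg].
  have [f1 [x [f2 [E Hx]]]] := has_split Hpos; subst fs.
  move: Hneg; rewrite has_split_b; have -> : (ell lam x.2 < 0) = false by lia.
  move=> /= Hneg.
  have [g1 [y [g2 [E2 Hy]]]] := has_split Hneg.
  move: Ha; rewrite all_split E2 all_split => /andP [Hxa /andP [Hya Ha]].
  move: Hmu; rewrite mu_split E2 mu_split.
  have -> : (ell lam x.2 != 0) = true by apply/eqP; lia.
  have -> : (ell lam y.2 != 0) = true by apply/eqP; lia.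
  move=> Hmu.
  have Hp' : is_poly (M (L ^ x.1) x.2 (M (L ^ y.1) y.2 (mul_factors L (g1 ++ g2) s))).
    by move: Hp; rewrite mf_split E2 mf_split.
  set rest := g1 ++ g2 in Hp' Ha Hmu.
  set wx := ell lam x.2 in Hx Hp'; set wy := ell lam y.2 in Hy.
  set q := `|wy|%N; set p := `|wx|%N.
  set a := (L ^ x.1) ^+ q; set u := vscale q x.2.
  set bb := (L ^ y.1) ^+ p; set w := vscale p y.2.
  set z := (x.1 * q%:Z + y.1 * p%:Z, vadd u w).
  have Hq : q%:Z = - wy by rewrite /q ltz0_abs.
  have Hpp : p%:Z = wx by rewrite /p gtz0_abs.
  have Lz : L ^ z.1 = a * bb by rewrite /= exprzDr // -!exprz_exp.
  have Hz0 : ell lam z.2 = 0.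
    by rewrite /= ell_vadd !ell_vscale Hq Hpp -/wx -/wy; ring.
  have Hza : adm z.
    move: Hxa => /andP [Hx1 /existsP [i Hi]]; move: Hya => /andP [Hy1 _].
    apply/andP; split; first by rewrite /=; lia.
    apply/existsP; exists i; rewrite /= /vadd /u /vscale.
    have : (0 < q)%N by rewrite /q; lia.
    move: Hi; lia.
  have Hzv : [exists i, z.2 i != 0%N] by case/andP: Hza.
  have [t Ht] : exists t, M (L ^ z.1) z.2 t = s.
    by exists (Gop (L ^ z.1) z.2 s); apply: M_Gop.
  have Es : s = fadd (fadd (M a u t) (M bb w t)) (fopp (M a u (M bb w t))).
    by rewrite -M_pair -Lz.
  have -> : resge lam b s = fadd (fadd (resge lam b (M a u t)) (resge lam b (M bb w t)))
     (fopp (resge lam b (M a u (M bb w t)))).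
    by rewrite {1}Es -resge_opp -!resge_add.
  have Hx0 : (ell lam x.2 != 0) = true by apply/eqP; rewrite -/wx; lia.
  have Hy0 : (ell lam y.2 != 0) = true by apply/eqP; rewrite -/wy; lia.
  apply: int_add; [apply: int_add|apply: int_opp].
  - apply: (IHN lam (z :: y :: rest)).
      by rewrite !mu_cons Hz0 eqxx Hy0; move: Hmu; lia.
      by rewrite /= Hza Hya Ha.
    rewrite !mf_cons mf_M (M_comm (L ^ y.1) a) (M_comm (L ^ z.1) a).
    rewrite (M_comm (L ^ z.1) (L ^ y.1)) -mf_M Ht.
    by apply: poly_geo.
  - apply: (IHN lam (z :: x :: rest)).
      by rewrite !mu_cons Hz0 eqxx Hx0; move: Hmu; lia.
      by rewrite /= Hza Hxa Ha.
    rewrite !mf_cons mf_M (M_comm (L ^ x.1) bb) (M_comm (L ^ z.1) bb).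
    rewrite (M_comm (L ^ z.1) (L ^ x.1)) -mf_M Ht.
    by apply: poly_geo; rewrite M_comm.
  - apply: (IHN lam (z :: rest)).
      by rewrite !mu_cons Hz0 eqxx; move: Hmu; lia.
      by rewrite /= Hza Ha.
    rewrite !mf_cons !mf_M (M_comm (L ^ z.1) a) (M_comm (L ^ z.1) bb) -mf_M Ht.
    apply: poly_geo; rewrite M_comm; apply: poly_geo; by rewrite M_comm.
case: fs Hz Hpn Hmu Ha Hp => [|x fs] Hz Hpn Hmu Ha Hp.
  by apply/int_poly/poly_resge.
move: Ha => /= /andP [Hxa Ha].
move: Hz => /= /norP [Hx0 Hz].
have Hpoly' : is_poly (mul_factors L fs (M (L ^ x.1) x.2 s)) by rewrite mf_M.
have Hmu' : forall lam', mu lam' fs = mu lam fs -> (mu lam' fs <= N)%N.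
  by move=> lam' ->; move: Hmu; rewrite mu_cons; lia.
have [Hxp|Hxn] : 0 < ell lam x.2 \/ ell lam x.2 < 0 by move: Hx0; lia.
  apply: (nonneg_case Hxa Ha) => //.
    move: Hpn => /=; rewrite Hxp /= => /negbT; rewrite negb_or => /andP [_]; rewrite -all_predC.
    by apply: sub_all => p' /=; rewrite -leNgt.
  by move=> b'; apply: (IHN lam fs) => //; apply: Hmu'.
have Hs : integrable L s by exists (x :: fs); split => //=; rewrite -/(adm x) Hxa.
rewrite resge_neg; apply: int_add => //; apply: int_opp.
apply: (nonneg_case Hxa Ha) => //.
- move: Hpn => /=; rewrite Hxn andbT => /negbT; rewrite negb_or => /andP [_].
  rewrite -all_predC.
  by apply: sub_all => p' /=; rewrite ell_neg oppr_ge0 leNgt.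
- by rewrite ell_neg oppr_gt0.
- by move=> b'; apply: (IHN (neg lam) fs) => //; apply: Hmu'; rewrite mu_neg.
Qed.


Lemma int_resge (hL : L \is a GRing.unit) lam b s :
  integrable L s -> integrable L (resge lam b s).
Proof. by move=> [fs [Ha Hp]]; apply: (@main hL (mu lam fs) lam fs). Qed.

Definition resP (P : pred (expo r)) s : fps A r := fun n => if P n then s n else 0.
Definition good (P : pred (expo r)) := forall s, integrable L s -> integrable L (resP P s).

Lemma good_ext P Q : P =1 Q -> good P -> good Q.
Proof.
move=> E HP s Hs; have -> : resP Q s = resP P s by apply: fext => n; rewrite /resP E.
exact: HP.
Qed.
Lemma good_and P Q : good P -> good Q -> good (fun n => P n && Q n).
Proof.
move=> HP HQ s Hs; have -> : resP (fun n => P n && Q n) s = resP P (resP Q s).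
  by apply: fext => n; rewrite /resP; case: (P n); case: (Q n).
by apply/HP/HQ.
Qed.
Lemma good_true : good (fun _ => true).
Proof. by move=> s Hs; have -> : resP (fun _ => true) s = s by apply: fext. Qed.
Lemma good_impl (c : bool) P : good P -> good (fun n => c ==> P n).
Proof. by case: c => // _; apply: good_true. Qed.
Lemma good_all (T : Type) (P : T -> pred (expo r)) l :
  (forall x, good (P x)) -> good (fun n => all (fun x => P x n) l).
Proof.
move=> H; elim: l => [|x l IH] /=; first exact: good_true.
exact: good_and.
Qed.

Definition lsub (l1 l2 : 'I_r -> int) : 'I_r -> int := fun i => l2 i - l1 i.
Lemma ell_lsub l1 l2 n : ell (lsub l1 l2) n = ell l2 n - ell l1 n.
Proof. by rewrite /ell -sumrB; apply: eq_bigr => i _; rewrite /lsub mulrBl. Qed.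

Lemma good_le (hL : L \is a GRing.unit) l1 l2 : good (fun n => ell l1 n <= ell l2 n).
Proof.
apply: (@good_ext (fun n => 0 <= ell (lsub l1 l2) n)).
  by move=> n /=; rewrite ell_lsub subr_ge0.
by move=> s Hs; apply: int_resge.
Qed.
Lemma good_lt (hL : L \is a GRing.unit) l1 l2 : good (fun n => ell l1 n < ell l2 n).
Proof.
apply: (@good_ext (fun n => 1 <= ell (lsub l1 l2) n)).
  by move=> n /=; rewrite ell_lsub; lia.
by move=> s Hs; apply: int_resge.
Qed.
Lemma good_eq (hL : L \is a GRing.unit) l1 l2 : good (fun n => ell l1 n == ell l2 n).
Proof.
apply: (@good_ext (fun n => (ell l1 n <= ell l2 n) && (ell l2 n <= ell l1 n))).
  by move=> n /=; rewrite eq_le.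
by apply: good_and; apply: good_le.
Qed.


Section Cell.
Variable rho : {perm 'I_r}.
Definition pull (n : expo r) : expo r := fun j => n ((rho^-1)%g j).
Definition cf (k : nat) : 'I_r -> int := fun i =>
  if (insub k.-1 : option 'I_r) is Some i' then (if (rho^-1)%g i' == i then 1 else 0) else 0.

Lemma ell_cf k n : ell (cf k) n = (Defs.coord (pull n) k)%:Z.
Proof.
rewrite /ell /cf /Defs.coord /pull; case: (insub k.-1 : option 'I_r) => [i'|] /=.
  rewrite (bigD1 ((rho^-1)%g i')) //= eqxx mul1r big1 ?addr0 // => i Hi.
  by rewrite eq_sym (negbTE Hi) mul0r.
by rewrite big1 // => i _; rewrite mul0r.
Qed.

Variable rs : seq nat.
Definition Pk j k (n : expo r) : bool :=
  (nth 0%N rs j.-1 < k)%N ==> (Defs.coord (pull n) k == Defs.coord (pull n) (nth 0%N rs j)).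
Definition Pj j (n : expo r) : bool :=
  all (fun k => Pk j k n) (iota 0 (nth 0%N rs j).+1) &&
  ((2 <= j)%N ==> (Defs.coord (pull n) (nth 0%N rs j.-1) < Defs.coord (pull n) (nth 0%N rs j))%N).
Definition Pcell (n : expo r) : bool := all (fun j => Pj j n) (iota 1 (size rs).-1).

Lemma good_Pcell (hL : L \is a GRing.unit) : good Pcell.
Proof.
apply: (@good_all _ Pj) => j; apply: good_and.
  apply: (@good_all _ (Pk j)) => k; apply: good_impl.
  apply: (@good_ext (fun n => ell (cf k) n == ell (cf (nth 0%N rs j)) n)).
    by move=> n /=; rewrite !ell_cf eqz_nat.
  exact: good_eq.
apply: good_impl.
apply: (@good_ext (fun n => ell (cf (nth 0%N rs j.-1)) n < ell (cf (nth 0%N rs j)) n)).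
  by move=> n /=; rewrite !ell_cf ltz_nat.
exact: good_lt.
Qed.

Lemma PcellP n : in_basic_cell rs (pull n) <-> Pcell n.
Proof.
split.
  move=> H; apply/allP => j; rewrite mem_iota => Hj.
  have [] := H j; first by move: Hj; lia.
  move=> H1 H2; apply/andP; split.
    apply/allP => k; rewrite mem_iota => Hk; apply/implyP => Hk2.
    by apply/eqP; apply: H1; move: Hk Hk2; lia.
  by apply/implyP => Hj2; apply: H2.
move=> /allP H j Hj.
have Hj' : j \in iota 1 (size rs).-1 by rewrite mem_iota; move: Hj; lia.
have /andP [/allP H1 /implyP H2] := H j Hj'.
split; last exact: H2.
move=> k Hk; have Hk' : k \in iota 0 (nth 0%N rs j).+1 by rewrite mem_iota; move: Hk; lia.
have := H1 k Hk'.
by move=> /implyP /(_ (proj1 (andP Hk))) /eqP.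
Qed.

End Cell.

End Aux.

Theorem lemma5p6 (A : comUnitRingType) (L : A)
    (hL : L \is a GRing.unit)
    (h1L : forall n : nat, (0 < n)%N -> (1 - L ^+ n) \is a GRing.unit)
    (r : nat) (a : fps A r) :
  integrable L a ->
  forall Delta : expo r -> Prop, ordered_cell Delta ->
  forall aDelta : fps A r,
    (forall n, Delta n -> aDelta n = a n) ->
    (forall n, ~ Delta n -> aDelta n = 0) ->
    integrable L aDelta.
Proof.
move=> Hint Delta [rs [rho [_ HD]]] aD H1 H2.
have HDP : forall n, Delta n <-> Pcell rho rs n.
  move=> n; rewrite HD -PcellP; split.
    move=> [m [Hm Hn]].
    have -> : pull rho n = m by apply: eext => j; rewrite /pull Hn permKV.
    exact: Hm.
  by move=> H; exists (pull rho n); split => // i; rewrite /pull permK.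
have -> : aD = resP (Pcell rho rs) a.
  apply: fext => n; rewrite /resP; case E: (Pcell rho rs n).
    by apply: H1; apply/HDP; rewrite E.
  by apply: H2 => /HDP; rewrite E.
exact: good_Pcell.
Qed.
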